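(* For $\alpha\in[1/2,1)$ consider the singular initial value problem $$h'(\theta)=-\frac{1}{\sin\theta}\big(\alpha h(\theta)^2-\cos\theta\,h(\theta)+1-\alpha\big),\quad 0<\theta\le\frac{\pi}{2},\qquad h(0)=1,\qquad(\ast)$$ where a (classical) solution is a function $h\in C[0,\pi/2]\cap C^1(0,\pi/2]$ satisfying the equation on $(0,\pi/2]$ and $h(0)=1$. (i) If $\alpha\in(1/2,1)$, then $(\ast)$ has a unique solution $h(\alpha,\cdot)$; moreover, if $1/2<\alpha_1<\alpha_2<1$ then $h(\alpha_1,\theta)<h(\alpha_2,\theta)$ for all $\theta\in(0,\pi/2]$. (ii) If $\alpha=1/2$, then $(\ast)$ has infinitely many (a continuum of) positive solutions. (iii) Let $\alpha\in(1/2,1)$ and let $\overline h\in C[0,\pi/2]\cap C^1(0,\pi/2]$ satisfy $\overline h'(\theta)\ge-\frac{1}{\sin\theta}\big(\alpha\overline h(\theta)^2-\cos\theta\,\overline h(\theta)+1-\alpha\big)$ for $0<\theta\le\pi/2$ and $\overline h(0)\ge1$. Then $h(\alpha,\theta)\le\overline h(\theta)$ for all $0\le\theta\le\pi/2$. *)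

(* Defs.v *)
From Stdlib Require Import Reals Lra.
Open Scope R_scope.

Definition Icl (x : R) : Prop := 0 <= x <= PI / 2.
Definition Iop (x : R) : Prop := 0 < x <= PI / 2.

Definition F (alpha th x : R) : R :=
  - (1 / sin th) * (alpha * x ^ 2 - cos th * x + 1 - alpha).

Definition deriv_within (f : R -> R) (D : R -> Prop) (x l : R) : Prop :=
  forall eps : R, eps > 0 -> exists delta : R, delta > 0 /\
    forall y : R, D y -> y <> x -> Rabs (y - x) < delta ->
      Rabs ((f y - f x) / (y - x) - l) < eps.

Definition C0C1 (h hd : R -> R) : Prop :=
  (forall x, Icl x -> continue_in h Icl x) /\
  (forall x, Iop x -> deriv_within h Icl x (hd x) /\ continue_in hd Iop x).

Definition is_solution (alpha : R) (h : R -> R) : Prop :=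
  exists hd : R -> R, C0C1 h hd /\
    (forall th, Iop th -> hd th = F alpha th (h th)) /\ h 0 = 1.

Definition is_supersolution (alpha : R) (h : R -> R) : Prop :=
  exists hd : R -> R, C0C1 h hd /\
    (forall th, Iop th -> hd th >= F alpha th (h th)) /\ h 0 >= 1.

(* Main.v *)
Require Import Defs.
From Stdlib Require Import Reals Lra Psatz.
From Coquelicot Require Import Coquelicot.
Open Scope R_scope.

Fixpoint ca (al : R) (n : nat) : R :=
  match n with
  | O => 1
  | S m => ca al m * ((INR m + al) ^ 2 / ((INR m + 1) * (INR m + al + / 2)))
  end.

Lemma ca_S al n : ca al (S n) = ca al n * ((INR n + al) ^ 2 / ((INR n + 1) * (INR n + al + / 2))).
Proof. reflexivity. Qed.

Lemma ca_bounds al : 0 < al <= 1 -> forall n, 0 < ca al n <= 1.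
Proof.
  intros Hal n; induction n as [|n IH]; simpl ca; [lra|].
  pose proof (pos_INR n) as Hn.
  assert (Hq : 0 < (INR n + al) ^ 2 / ((INR n + 1) * (INR n + al + / 2)) <= 1).
  { split.
    - apply Rdiv_lt_0_compat; [apply pow_lt; lra| apply Rmult_lt_0_compat; lra].
    - apply Rmult_le_reg_r with ((INR n + 1) * (INR n + al + / 2)).
      + apply Rmult_lt_0_compat; lra.
      + unfold Rdiv. rewrite Rmult_assoc, Rinv_l, Rmult_1_r by (apply Rgt_not_eq, Rmult_lt_0_compat; lra).
        nra. }
  split; [apply Rmult_lt_0_compat; lra|].
  destruct IH, Hq. nra.
Qed.

Lemma rad_ge1 (a : nat -> R) : (forall n, Rabs (a n) <= 1) ->
  forall x, Rabs x < 1 -> Rbar_lt (Rabs x) (CV_radius a).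
Proof.
  intros Ha x Hx.
  destruct (CV_radius_bounded a) as [Hub _].
  assert (H1 : Rbar_le 1 (CV_radius a)).
  { apply Hub. exists 1. intros n. rewrite pow1, Rmult_1_r. apply Ha. }
  destruct (CV_radius a) as [r| |]; simpl in *; lra.
Qed.

Definition F0 al x := PSeries (ca al) x.
Definition F1 al x := PSeries (PS_derive (ca al)) x.
Definition F2 al x := PSeries (PS_derive (PS_derive (ca al))) x.


Lemma rad0 (al : R) (Hal : 0 < al <= 1) x : Rabs x < 1 -> Rbar_lt (Rabs x) (CV_radius (ca al)).
Proof.
  intros; apply rad_ge1; auto. intros n; destruct (ca_bounds al Hal n).
  rewrite Rabs_pos_eq; lra.
Qed.
Lemma rad1 (al : R) (Hal : 0 < al <= 1) x : Rabs x < 1 -> Rbar_lt (Rabs x) (CV_radius (PS_derive (ca al))).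
Proof. intros; rewrite CV_radius_derive; now apply rad0. Qed.
Lemma rad2 (al : R) (Hal : 0 < al <= 1) x : Rabs x < 1 -> Rbar_lt (Rabs x) (CV_radius (PS_derive (PS_derive (ca al)))).
Proof. intros; rewrite !CV_radius_derive; now apply rad0. Qed.

Lemma dF0 (al : R) (Hal : 0 < al <= 1) x : Rabs x < 1 -> is_derive (F0 al) x (F1 al x).
Proof. intros; apply is_derive_PSeries, rad0; auto. Qed.
Lemma dF1 (al : R) (Hal : 0 < al <= 1) x : Rabs x < 1 -> is_derive (F1 al) x (F2 al x).
Proof. intros; apply is_derive_PSeries, rad1; auto. Qed.


Lemma PSeries_nonneg (b : nat -> R) x : (forall n, 0 <= b n) -> 0 <= x ->
  ex_pseries b x -> 0 <= PSeries b x.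
Proof.
  intros Hb Hx Hex. unfold PSeries.
  rewrite <- (PSeries_const_0 x). unfold PSeries.
  apply Series_le.
  - intros n; split; [lra|]. rewrite Rmult_0_l. apply Rmult_le_pos; auto. apply pow_le; auto.
  - now apply ex_pseries_R.
Qed.

Lemma PSeries_ge0 (b : nat -> R) x : (forall n, 0 <= b n) -> 0 <= x ->
  ex_pseries b x -> b O <= PSeries b x.
Proof.
  intros Hb Hx Hex. rewrite PSeries_decr_1 by auto.
  assert (0 <= x * PSeries (PS_decr_1 b) x); [|lra].
  apply Rmult_le_pos; auto. apply PSeries_nonneg; auto.
  - intros n; unfold PS_decr_1; auto.
  - apply ex_pseries_decr_1; auto.
    destruct (Req_dec x 0) as [->|Hn]; [now left|right].
    exists (/ x). change (/ x * x = 1). field; auto.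
Qed.

Lemma isR_plus a b la lb : is_series a la -> is_series b lb ->
  is_series (fun n => a n + b n) (la + lb).
Proof. apply (is_series_plus a b la lb). Qed.
Lemma isR_scal c a l : is_series a l -> is_series (fun n => c * a n) (c * l).
Proof. apply (is_series_scal c a l). Qed.
Lemma isp a x : ex_pseries a x -> is_series (fun n => a n * x ^ n) (PSeries a x).
Proof. intros H; apply is_pseries_R, PSeries_correct, H. Qed.

Lemma incr1_eq (b : nat -> R) n : @eq R (PS_incr_1 b n) (match n with O => 0 | S m => b m end).
Proof. destruct n; reflexivity. Qed.


Lemma cB (al : R) n : PS_derive (ca al) n = (INR n + 1) * ca al (S n).
Proof. unfold PS_derive; rewrite S_INR; reflexivity. Qed.
Lemma cxB (al : R) n : @eq R (PS_incr_1 (PS_derive (ca al)) n) (INR n * ca al n).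
Proof. rewrite incr1_eq. destruct n; [simpl; ring|]. rewrite cB, S_INR; ring. Qed.
Lemma cxA (al : R) n : @eq R (PS_incr_1 (PS_derive (PS_derive (ca al))) n) (INR n * (INR n + 1) * ca al (S n)).
Proof. rewrite incr1_eq. destruct n; [simpl; ring|]. unfold PS_derive at 1. rewrite cB, !S_INR; ring. Qed.
Lemma cxxA (al : R) n : @eq R (PS_incr_1 (PS_incr_1 (PS_derive (PS_derive (ca al)))) n) (INR n * (INR n - 1) * ca al n).
Proof.
  rewrite incr1_eq. destruct n as [|n]; [simpl; ring|]. rewrite cxA, S_INR. ring.
Qed.

Lemma F_ode (al : R) (Hal : 0 < al <= 1) x : Rabs x < 1 ->
  x * (1 - x) * F2 al x + (al + / 2 - (2 * al + 1) * x) * F1 al x - al ^ 2 * F0 al x = 0.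
Proof.
  intros Hx.
  set (a := ca al). set (B := PS_derive a). set (A := PS_derive B).
  assert (e0 : ex_pseries a x) by (apply CV_radius_inside, rad0; auto).
  assert (eB : ex_pseries B x) by (apply CV_radius_inside, rad1; auto).
  assert (eA : ex_pseries A x) by (apply CV_radius_inside, rad2; auto).
  pose proof (isp a x e0) as s0.
  pose proof (isp B x eB) as s1.
  pose proof (isp A x eA) as s2.
  pose proof (isp _ x (ex_pseries_incr_1 _ _ eA)) as s3. rewrite PSeries_incr_1 in s3.
  pose proof (isp _ x (ex_pseries_incr_1 _ _ (ex_pseries_incr_1 _ _ eA))) as s4.
  rewrite !PSeries_incr_1 in s4.
  pose proof (isp _ x (ex_pseries_incr_1 _ _ eB)) as s5. rewrite PSeries_incr_1 in s5.
  pose proof (isR_plus _ _ _ _ (isR_plus _ _ _ _ (isR_plus _ _ _ _ (isR_plus _ _ _ _ s3 (isR_scal (-1) _ _ s4))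
       (isR_scal (al + /2) _ _ s1)) (isR_scal (-(2*al+1)) _ _ s5)) (isR_scal (- al^2) _ _ s0)) as S.
  assert (S0 : is_series (fun n => 0 * x ^ n) (x * (1 - x) * F2 al x + (al + / 2 - (2 * al + 1) * x) * F1 al x - al ^ 2 * F0 al x)).
  { eapply is_series_ext; [|unfold F0, F1, F2; fold a B A; replace (x * (1 - x) * PSeries A x + (al + / 2 - (2 * al + 1) * x) * PSeries B x - al ^ 2 * PSeries a x) with
      (x * PSeries A x + -1 * (x * (x * PSeries A x)) + (al + / 2) * PSeries B x + - (2 * al + 1) * (x * PSeries B x) + - al ^ 2 * PSeries a x) by ring; exact S].
    intros n. simpl.
    unfold A, B, a. rewrite cxA, cxxA, cxB, cB, ca_S.
    pose proof (pos_INR n).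
    field. lra. }
  apply is_series_unique in S0. rewrite <- S0.
  exact (PSeries_const_0 x).
Qed.

Lemma F_lt (al : R) (Hal : 0 < al <= 1) x : 0 <= x < 1 -> (1 - x) * F1 al x < al * F0 al x.
Proof.
  intros Hx. assert (Hx' : Rabs x < 1) by (rewrite Rabs_pos_eq; lra).
  set (a := ca al). set (B := PS_derive a).
  assert (e0 : ex_pseries a x) by (apply CV_radius_inside, rad0; auto).
  assert (eB : ex_pseries B x) by (apply CV_radius_inside, rad1; auto).
  pose proof (isp a x e0) as s0.
  pose proof (isp B x eB) as s1.
  pose proof (isp _ x (ex_pseries_incr_1 _ _ eB)) as s5. rewrite PSeries_incr_1 in s5.
  set (e := fun n => al * a n + -1 * B n + PS_incr_1 B n).
  pose proof (isR_plus _ _ _ _ (isR_plus _ _ _ _ (isR_scal al _ _ s0) (isR_scal (-1) _ _ s1)) s5) as S.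
  assert (S0 : is_series (fun n => e n * x ^ n) (al * F0 al x - (1 - x) * F1 al x)).
  { eapply is_series_ext; [|unfold F0, F1; fold a B;
      replace (al * PSeries a x - (1 - x) * PSeries B x) with (al * PSeries a x + -1 * PSeries B x + x * PSeries B x) by ring; exact S].
    intros n; unfold e; simpl. ring. }
  assert (He : forall n, e n = ca al n * (INR n + al) * / 2 / (INR n + al + / 2)).
  { intros n; unfold e, B, a. rewrite cxB, cB, ca_S. pose proof (pos_INR n). field. lra. }
  assert (Hep : forall n, 0 < e n).
  { intros n; rewrite He. pose proof (pos_INR n). pose proof (ca_bounds al Hal n).
    apply Rdiv_lt_0_compat; [|lra]. apply Rmult_lt_0_compat; [|lra]. apply Rmult_lt_0_compat; lra. }
  assert (Hex : ex_pseries e x) by (apply ex_pseries_R; eexists; exact S0).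
  pose proof (PSeries_ge0 e x (fun n => Rlt_le _ _ (Hep n)) (proj1 Hx) Hex).
  apply is_series_unique in S0. unfold PSeries in H. rewrite S0 in H.
  specialize (Hep O). lra.
Qed.

Lemma F0_ge1 (al : R) (Hal : 0 < al <= 1) x : 0 <= x < 1 -> 1 <= F0 al x.
Proof.
  intros Hx. change 1 with (ca al O). apply PSeries_ge0; try lra.
  - intros n; destruct (ca_bounds al Hal n); lra.
  - apply CV_radius_inside, (rad0 al Hal); rewrite Rabs_pos_eq; lra.
Qed.

Lemma F1_ge (al : R) (Hal : 0 < al <= 1) x : 0 <= x < 1 -> ca al 1 <= F1 al x.
Proof.
  intros Hx. replace (ca al 1) with (PS_derive (ca al) O) by (unfold PS_derive; simpl; ring).
  apply PSeries_ge0; try lra.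
  - intros n; rewrite cB; pose proof (pos_INR n); destruct (ca_bounds al Hal (S n)); nra.
  - apply CV_radius_inside, (rad1 al Hal); rewrite Rabs_pos_eq; lra.
Qed.

Lemma F0_le (al : R) (Hal : 0 < al <= 1) x : 0 <= x < 1 -> F0 al x <= / (1 - x).
Proof.
  intros Hx. unfold F0, PSeries.
  assert (Hx' : Rabs x < 1) by (rewrite Rabs_pos_eq; lra).
  rewrite <- (is_series_unique _ _ (is_series_geom x Hx')).
  apply Series_le.
  - intros n; destruct (ca_bounds al Hal n). pose proof (pow_le x n (proj1 Hx)). split; nra.
  - eexists; apply is_series_geom; auto.
Qed.


Definition G al x := 1 - 2 * x + 2 * x * (1 - x) * F1 al x / (al * F0 al x).
Definition dG al x := -2 + 2 * (1 - 2 * x) * F1 al x / (al * F0 al x)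
   + 2 * x * (1 - x) * (F2 al x * F0 al x - F1 al x ^ 2) / (al * F0 al x ^ 2).

Lemma G_deriv al x : 0 < al <= 1 -> 0 <= x < 1 -> is_derive (G al) x (dG al x).
Proof.
  intros Hal Hx. assert (Hx' : Rabs x < 1) by (rewrite Rabs_pos_eq; lra).
  pose proof (dF0 al Hal x Hx') as H0. pose proof (dF1 al Hal x Hx') as H1.
  pose proof (F0_ge1 al Hal x Hx) as Hg.
  unfold G. auto_derive.
  - repeat split; try (eexists; eassumption). apply Rmult_integral_contrapositive; split; lra.
  - replace (Derive (fun x0 : R => F1 al x0) x) with (F2 al x) by (symmetry; apply is_derive_unique; exact H1).
    replace (Derive (fun x0 : R => F0 al x0) x) with (F1 al x) by (symmetry; apply is_derive_unique; exact H0).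
    unfold dG. field. lra.
Qed.

Lemma G_ric al x : 0 < al <= 1 -> 0 < x < 1 ->
  2 * x * (1 - x) * dG al x = - (al * G al x ^ 2 - (1 - 2 * x) * G al x + 1 - al).
Proof.
  intros Hal Hx. assert (Hx' : Rabs x < 1) by (rewrite Rabs_pos_eq; lra).
  pose proof (F_ode al Hal x Hx') as E.
  pose proof (F0_ge1 al Hal x ltac:(lra)) as Hg.
  assert (E2 : F2 al x = (al ^ 2 * F0 al x - (al + / 2 - (2 * al + 1) * x) * F1 al x) / (x * (1 - x))).
  { apply (Rmult_eq_reg_l (x * (1 - x))); [|nra]. field_simplify; nra. }
  unfold dG, G. rewrite E2. field. repeat split; lra.
Qed.

Definition X th := (1 - cos th) / 2.

Lemma X_range th : 0 < th <= PI / 2 -> 0 < X th <= / 2.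
Proof.
  intros Hth. unfold X.
  assert (Hs : 0 < sin th) by (apply sin_gt_0; lra).
  assert (Hc : 0 <= cos th) by (apply cos_ge_0; lra).
  pose proof (sin2_cos2 th) as E. unfold Rsqr in E. assert (cos th < 1) by nra. lra.
Qed.

Lemma theta_sol al (Phi dPhi : R -> R) th : 0 < th <= PI / 2 ->
  is_derive Phi (X th) (dPhi (X th)) ->
  2 * X th * (1 - X th) * dPhi (X th) = - (al * Phi (X th) ^ 2 - (1 - 2 * X th) * Phi (X th) + 1 - al) ->
  derivable_pt_lim (fun t => Phi (X t)) th (F al th (Phi (X th))).
Proof.
  intros Hth Hd Hr.
  assert (Hs : 0 < sin th) by (apply sin_gt_0; lra).
  assert (HX : is_derive X th (sin th / 2)).
  { unfold X. auto_derive; auto. rewrite Rmult_1_l, Ropp_involutive; reflexivity. }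
  pose proof (is_derive_comp Phi X th _ _ Hd HX) as Hc.
  assert (Eq : F al th (Phi (X th)) = sin th / 2 * dPhi (X th)).
  { unfold F. pose proof (sin2_cos2 th) as E.
    assert (Ec : cos th = 1 - 2 * X th) by (unfold X; field).
    rewrite Ec. apply (Rmult_eq_reg_l (2 * sin th)); [|lra].
    replace (2 * sin th * (sin th / 2 * dPhi (X th))) with (sin th ^ 2 * dPhi (X th)) by field.
    replace (sin th ^ 2) with (4 * X th * (1 - X th)) by (unfold X; unfold Rsqr in E; nra).
    field_simplify; [|lra]. nra. }
  apply is_derive_Reals. rewrite Eq. exact Hc.
Qed.

Lemma deriv_of_dpl f D x l : derivable_pt_lim f x l -> deriv_within f D x l.
Proof.
  intros H eps Heps. destruct (H eps Heps) as [d Hd].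
  exists d; split; [apply cond_pos|]. intros y _ Hyx Hy.
  replace y with (x + (y - x)) at 1 by ring.
  apply Hd; [lra|exact Hy].
Qed.

Lemma cont_of_cpt f D x : continuity_pt f x -> continue_in f D x.
Proof.
  unfold continuity_pt, continue_in, limit1_in, limit_in; simpl.
  intros H eps Heps. destruct (H eps Heps) as [d [Hd Hd']].
  exists d; split; auto. intros y [[_ Hy1] Hy2]. apply Hd'. split; [split; [exact I|auto]|auto].
Qed.

Lemma dpl_of_deriv f x l : 0 < x < PI / 2 -> deriv_within f Icl x l -> derivable_pt_lim f x l.
Proof.
  intros Hx H eps Heps. destruct (H eps Heps) as [d [Hd Hd']].
  assert (Hp : 0 < Rmin d (Rmin x (PI / 2 - x))) by (repeat apply Rmin_pos; lra).
  exists (mkposreal _ Hp). intros h Hh Hh'. simpl in Hh'.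
  pose proof (Rmin_l d (Rmin x (PI / 2 - x))). pose proof (Rmin_r d (Rmin x (PI / 2 - x))).
  pose proof (Rmin_l x (PI / 2 - x)). pose proof (Rmin_r x (PI / 2 - x)).
  assert (-(Rabs h) <= h <= Rabs h) by (unfold Rabs; destruct Rcase_abs; lra).
  replace ((f (x + h) - f x) / h) with ((f (x + h) - f x) / ((x + h) - x)) by (f_equal; ring).
  apply Hd'.
  - unfold Icl. lra.
  - lra.
  - replace (x + h - x) with h by ring. lra.
Qed.

Definition clamp t := Rmax 0 (Rmin t (PI / 2)).

Lemma clamp_Icl t : Icl (clamp t).
Proof.
  unfold clamp, Icl. pose proof PI_RGT_0.
  split; [apply Rmax_l|]. apply Rmax_lub; [lra|apply Rmin_r].
Qed.

Lemma clamp_id t : Icl t -> clamp t = t.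
Proof.
  unfold clamp, Icl; intros H. rewrite Rmin_left by lra. rewrite Rmax_right; lra.
Qed.

Lemma clamp_lip s t : Rabs (clamp s - clamp t) <= Rabs (s - t).
Proof.
  unfold clamp. pose proof PI_RGT_0.
  unfold Rmax, Rmin; repeat destruct Rle_dec; repeat destruct Rle_dec;
  unfold Rabs; repeat destruct Rcase_abs; lra.
Qed.

Lemma clamp_cont f : (forall x, Icl x -> continue_in f Icl x) ->
  forall t, continuity_pt (fun t => f (clamp t)) t.
Proof.
  intros Hf t eps Heps. pose proof (clamp_Icl t) as Ht.
  destruct (Hf _ Ht eps Heps) as [d [Hd Hd']].
  exists d; split; auto. intros y [_ Hy]. simpl in *. unfold R_dist in *.
  destruct (Req_dec (clamp y) (clamp t)) as [E|E].
  - rewrite E, Rminus_diag, Rabs_R0; lra.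
  - apply Hd'. split; [split; [apply clamp_Icl|auto]|]. 
    pose proof (clamp_lip y t). lra.
Qed.

Lemma incr_lemma f df a b : a < b ->
  (forall x, a < x < b -> is_derive f x (df x)) -> (forall x, a < x < b -> 0 <= df x) ->
  (forall x, a <= x <= b -> continuity_pt f x) -> f a <= f b.
Proof.
  intros Hab Hd Hp Hc.
  set (df' := fun x => if Rlt_dec a x then if Rlt_dec x b then df x else 0 else 0).
  destruct (MVT_gen f a b df') as [c [Hc1 Hc2]].
  - rewrite Rmin_left, Rmax_right by lra. intros x Hx. unfold df'.
    destruct (Rlt_dec a x); [|lra]. destruct (Rlt_dec x b); [|lra]. auto.
  - rewrite Rmin_left, Rmax_right by lra. auto.
  - assert (0 <= df' c).
    { unfold df'. destruct (Rlt_dec a c); [|lra]. destruct (Rlt_dec c b); [|lra]. apply Hp; lra. }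
    nra.
Qed.

Lemma mk_solution al h : (forall th, Icl th -> continue_in h Icl th) ->
  (forall th, Iop th -> derivable_pt_lim h th (F al th (h th))) -> h 0 = 1 -> is_solution al h.
Proof.
  intros Hc Hd H0. exists (fun th => F al th (h th)). split; [split|split; auto].
  - exact Hc.
  - intros th Hth. split; [apply deriv_of_dpl, Hd, Hth|].
    apply cont_of_cpt. unfold F.
    assert (Hs : 0 < sin th) by (apply sin_gt_0; unfold Iop in Hth; lra).
    assert (Hh : continuity_pt h th) by (apply derivable_continuous_pt; exists (F al th (h th)); apply Hd; auto).
    apply continuity_pt_mult.
    + apply continuity_pt_opp. apply continuity_pt_div; [apply continuity_pt_const; intros ? ?; auto|apply continuity_sin|lra].
    + assert (Hh2 : continuity_pt (fun t => h t ^ 2) th).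
      { simpl. apply continuity_pt_mult; [exact Hh|]. apply continuity_pt_mult; [exact Hh|]. apply continuity_pt_const; intros ? ?; auto. }
      repeat first [exact Hh | exact Hh2 | apply continuity_cos | apply continuity_pt_minus | apply continuity_pt_plus | apply continuity_pt_mult | apply continuity_pt_const; intros ? ?; auto].
Qed.

Lemma clamp_loc (f : R -> R) t : 0 < t < PI / 2 -> locally t (fun y => f y = f (clamp y)).
Proof.
  intros Ht. assert (Hp : 0 < Rmin t (PI / 2 - t)) by (apply Rmin_pos; lra).
  exists (mkposreal _ Hp). intros y Hy. change (Rabs (y - t) < Rmin t (PI / 2 - t)) in Hy.
  pose proof (Rmin_l t (PI / 2 - t)). pose proof (Rmin_r t (PI / 2 - t)).
  rewrite clamp_id; auto. unfold Icl. unfold Rabs in Hy; destruct Rcase_abs in Hy; lra.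
Qed.

Lemma comparison al h hb : 1 / 2 < al < 1 -> is_solution al h -> is_supersolution al hb ->
  forall th, Icl th -> h th <= hb th.
Proof.
  intros Hal [hd [[Hc Hdv] [Hode H0]]] [hbd [[Hbc Hbdv] [Hbode Hb0]]] th Hth.
  destruct (Rle_dec (h th) (hb th)) as [|Hlt]; auto. exfalso. apply Rnot_le_lt in Hlt.
  pose proof PI_RGT_0 as HPI.
  set (d := fun t => hb t - h t).
  assert (Hdc : forall t, continuity_pt (fun t => d (clamp t)) t).
  { intros t. unfold d. apply continuity_pt_minus; apply clamp_cont; auto. }
  assert (Hth0 : 0 < th).
  { destruct Hth as [Hth _]. destruct (Req_dec th 0) as [->|]; [|lra]. lra. }
  set (E := fun t => 0 <= t <= th /\ 0 <= d t).
  destruct (completeness E) as [s [Hub Hlub]].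
  { exists th. intros t [Ht _]. lra. }
  { exists 0. split; [lra|]. unfold d; lra. }
  assert (Hs0 : 0 <= s) by (apply Hub; split; [lra|unfold d; lra]).
  assert (Hs1 : s <= th) by (apply Hlub; intros t [Ht _]; lra).
  assert (HsI : Icl s). { unfold Icl in *. lra. }
  assert (Hds : 0 <= d s).
  { destruct (Rle_dec 0 (d s)) as [|Hn]; auto. apply Rnot_le_lt in Hn. exfalso.
    destruct (Hdc s (- d s)) as [del [Hdel Hdel']]; [lra|].
    assert (Hub2 : is_upper_bound E (s - del / 2)).
    { intros t [Ht Hdt]. destruct (Rle_dec t (s - del / 2)) as [|Hn2]; auto.
      apply Rnot_le_lt in Hn2. assert (t <= s) by (apply Hub; split; auto).
      destruct (Req_dec t s) as [->|Hts]; [lra|].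
      assert (Hd' := Hdel' t). simpl in Hd'. unfold R_dist in Hd'.
      rewrite (clamp_id s HsI), (clamp_id t) in Hd' by (unfold Icl in *; lra).
      assert (Habs : Rabs (t - s) < del) by (unfold Rabs; destruct Rcase_abs; lra).
      specialize (Hd' (conj (conj I (not_eq_sym Hts)) Habs)).
      unfold Rabs in Hd'; destruct Rcase_abs in Hd'; lra. }
    specialize (Hlub _ Hub2). lra. }
  assert (Hneg : forall t, s < t <= th -> d t < 0).
  { intros t Ht. destruct (Rlt_dec (d t) 0) as [|Hn]; auto. apply Rnot_lt_le in Hn.
    assert (t <= s) by (apply Hub; split; [lra|auto]). lra. }
  assert (Hsth : s < th).
  { destruct (Req_dec s th) as [Heq|]; [|lra]. rewrite Heq in Hds. unfold d in Hds. lra. }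
  set (N := fun t => al * (hb t + h t) - cos t).
  assert (HN0 : exists del0, 0 < del0 /\ forall t, Icl t -> t < del0 -> 0 < N t).
  { assert (HNc : continuity_pt (fun t => al * (hb (clamp t) + h (clamp t)) - cos t) 0).
    { apply continuity_pt_minus; [|apply continuity_cos].
      apply continuity_pt_mult; [apply continuity_pt_const; intros ? ?; auto|].
      apply continuity_pt_plus; apply clamp_cont; auto. }
    assert (Hc0 : clamp 0 = 0) by (apply clamp_id; unfold Icl; lra).
    assert (HN00 : 0 < al * (hb 0 + h 0) - cos 0) by (rewrite cos_0, H0; nra).
    destruct (HNc (al * (hb 0 + h 0) - cos 0)) as [del [Hdel Hdel']]; [lra|].
    exists del; split; auto. intros t Ht Htd.
    destruct (Req_dec t 0) as [->|Ht0]; [unfold N; lra|].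
    specialize (Hdel' t). simpl in Hdel'. unfold R_dist in Hdel'.
    rewrite Hc0, (clamp_id t Ht) in Hdel'.
    assert (Habs : Rabs (t - 0) < del) by (unfold Icl in Ht; rewrite Rminus_0_r, Rabs_pos_eq; lra).
    specialize (Hdel' (conj (conj I (not_eq_sym Ht0)) Habs)).
    unfold N. unfold Rabs in Hdel'; destruct Rcase_abs in Hdel'; lra. }
  destruct HN0 as [del0 [Hdel0 HN0]].
  destruct (continuity_ab_min (fun t => hb (clamp t)) 0 (PI / 2)) as [m1 [Hm1 _]]; [lra| intros; apply clamp_cont; auto|].
  destruct (continuity_ab_min (fun t => h (clamp t)) 0 (PI / 2)) as [m2 [Hm2 _]]; [lra| intros; apply clamp_cont; auto|].
  set (B := Rabs (al * (hb (clamp m1) + h (clamp m2)) - 1)).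
  set (del1 := Rmin (del0 / 2) (PI / 4)).
  assert (Hdel1 : 0 < del1) by (apply Rmin_pos; lra).
  assert (Hdel1' : del1 <= PI / 4) by apply Rmin_r.
  assert (Hdel1'' : del1 < del0) by (pose proof (Rmin_l (del0 / 2) (PI / 4)); unfold del1; lra).
  assert (Hsd1 : 0 < sin del1) by (apply sin_gt_0; lra).
  set (M := B / sin del1).
  assert (HM : forall t, 0 < t <= PI / 2 -> - M <= N t / sin t).
  { intros t Ht. assert (Hst : 0 < sin t) by (apply sin_gt_0; lra).
    assert (HB : 0 <= B) by apply Rabs_pos.
    assert (HM0 : 0 <= M) by (apply Rdiv_le_0_compat; lra).
    destruct (Rle_dec 0 (N t)) as [HNt|HNt].
    - assert (0 <= N t / sin t) by (apply Rdiv_le_0_compat; lra). lra.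
    - apply Rnot_le_lt in HNt.
      assert (Htd : del0 <= t).
      { destruct (Rle_dec del0 t) as [|Hn]; auto. exfalso.
        assert (0 < N t) by (apply HN0; [unfold Icl; lra|lra]). lra. }
      assert (Hsin : sin del1 <= sin t) by (apply sin_incr_1; lra).
      assert (HNB : - B <= N t).
      { assert (hb (clamp m1) <= hb t) by (rewrite <- (clamp_id t) by (unfold Icl; lra); apply Hm1; lra).
        assert (h (clamp m2) <= h t) by (rewrite <- (clamp_id t) by (unfold Icl; lra); apply Hm2; lra).
        assert (cos t <= 1) by apply COS_bound.
        assert (- B <= al * (hb (clamp m1) + h (clamp m2)) - 1).
        { unfold B. pose proof (Rabs_le_between' 0 0 0). unfold Rabs; destruct Rcase_abs; lra. }
        unfold N. nra. }
      unfold M. apply Rle_trans with (N t / sin del1).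
      + unfold Rdiv. rewrite Ropp_mult_distr_l. apply Rmult_le_compat_r; [|lra].
        left; apply Rinv_0_lt_compat; lra.
      + unfold Rdiv.
        apply Rmult_le_compat_neg_l; [lra|]. apply Rinv_le_contravar; lra. }
  set (psi := fun t => d (clamp t) * exp (- (M * t))).
  assert (Hinc : psi s <= psi th).
  { apply (incr_lemma psi (fun t => (hbd t - hd t) * exp (- (M * t)) + d t * (- M * exp (- (M * t))))); auto.
    - intros t Ht.
      assert (Ht' : 0 < t < PI / 2) by (unfold Icl in Hth; lra).
      assert (Hdd : is_derive (fun y => d (clamp y)) t (hbd t - hd t)).
      { apply (is_derive_ext_loc d); [apply clamp_loc; auto|].
        assert (Hh1 : is_derive hb t (hbd t)) by (apply is_derive_Reals, dpl_of_deriv; auto; apply Hbdv; unfold Iop; lra).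
        assert (Hh2 : is_derive h t (hd t)) by (apply is_derive_Reals, dpl_of_deriv; auto; apply Hdv; unfold Iop; lra).
        exact (is_derive_minus hb h t _ _ Hh1 Hh2). }
      assert (Hexp : is_derive (fun y => exp (- (M * y))) t (- M * exp (- (M * t)))).
      { auto_derive; auto. ring. }
      pose proof (is_derive_mult _ _ t _ _ Hdd Hexp (fun n m => Rmult_comm n m)) as HH.
      cbv beta in HH. rewrite (clamp_id t) in HH by (unfold Icl; lra). exact HH.
    - intros t Ht. assert (Hdt : d t < 0) by (apply Hneg; lra).
      assert (HIt : Iop t) by (unfold Iop; unfold Icl in Hth; lra).
      assert (Hst : 0 < sin t) by (apply sin_gt_0; unfold Iop in HIt; lra).
      specialize (Hbode t HIt). specialize (Hode t HIt).
      specialize (HM t ltac:(unfold Iop in HIt; lra)).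
      assert (Hkey : F al t (hb t) - F al t (h t) = - (N t / sin t) * d t).
      { unfold F, N, d. field. lra. }
      assert (Hexp : 0 < exp (- (M * t))) by apply exp_pos.
      assert (0 <= hbd t - hd t - M * d t) by nra.
      nra.
    - intros t Ht. unfold psi. apply continuity_pt_mult; [apply Hdc|].
      change (continuity_pt (comp exp (fun t => - (M * t))) t).
      apply continuity_pt_comp; [|apply derivable_continuous_pt, derivable_pt_exp].
      apply continuity_pt_opp, continuity_pt_mult; [apply continuity_pt_const; intros ? ?; auto|apply derivable_continuous_pt, derivable_pt_id]. }
  unfold psi in Hinc.
  rewrite (clamp_id s HsI), (clamp_id th Hth) in Hinc.
  assert (0 < exp (- (M * s))) by apply exp_pos.
  assert (0 < exp (- (M * th))) by apply exp_pos.
  assert (d th < 0) by (unfold d; lra).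
  nra.
Qed.

Definition hsol al th := G al (X th).

Lemma X_Icl th : Icl th -> 0 <= X th <= / 2.
Proof.
  intros [H1 H2]. unfold X. pose proof PI_RGT_0.
  assert (0 <= cos th) by (apply cos_ge_0; lra). pose proof (COS_bound th). lra.
Qed.

Lemma X_deriv th : is_derive X th (sin th / 2).
Proof. unfold X. auto_derive; auto. rewrite Rmult_1_l, Ropp_involutive; reflexivity. Qed.

Lemma hsol_cont al th : 0 < al <= 1 -> Icl th -> continuity_pt (hsol al) th.
Proof.
  intros Hal Hth. apply derivable_continuous_pt. exists (sin th / 2 * dG al (X th)).
  apply is_derive_Reals. unfold hsol.
  pose proof (X_Icl th Hth).
  exact (is_derive_comp (G al) X th _ _ (G_deriv al (X th) Hal ltac:(lra)) (X_deriv th)).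
Qed.

Lemma G_at0 al : G al 0 = 1.
Proof. unfold G. unfold Rdiv. ring. Qed.

Lemma X0 : X 0 = 0.
Proof. unfold X. rewrite cos_0. field. Qed.

Lemma hsol_sol al : 0 < al <= 1 -> is_solution al (hsol al).
Proof.
  intros Hal. apply mk_solution.
  - intros th Hth. apply cont_of_cpt, hsol_cont; auto.
  - intros th Hth. unfold hsol. pose proof (X_range th Hth).
    apply (theta_sol al (G al) (dG al)); auto.
    + apply G_deriv; auto; lra.
    + apply G_ric; auto; lra.
  - unfold hsol. rewrite X0. apply G_at0.
Qed.

Lemma sol_super al h : is_solution al h -> is_supersolution al h.
Proof.
  intros [hd [H1 [H2 H3]]]. exists hd; split; [auto|split].
  - intros th Hth. rewrite H2; auto; lra.
  - lra.
Qed.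

Lemma uniq al g h : 1 / 2 < al < 1 -> is_solution al g -> is_solution al h ->
  forall th, Icl th -> g th = h th.
Proof.
  intros Hal Hg Hh th Hth. apply Rle_antisym.
  - apply (comparison al g h); auto. apply sol_super; auto.
  - apply (comparison al h g); auto. apply sol_super; auto.
Qed.

Lemma G_bounds al x : 1 / 2 < al < 1 -> 0 < x <= / 2 -> 0 < G al x < 1.
Proof.
  intros Hal Hx. assert (Hal' : 0 < al <= 1) by lra.
  pose proof (F0_ge1 al Hal' x ltac:(lra)).
  pose proof (F1_ge al Hal' x ltac:(lra)).
  pose proof (ca_bounds al Hal' 1).
  pose proof (F_lt al Hal' x ltac:(lra)).
  unfold G. split.
  - assert (0 < 2 * x * (1 - x) * F1 al x / (al * F0 al x)).
    { apply Rdiv_lt_0_compat; [|nra]. repeat apply Rmult_lt_0_compat; lra. }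
    lra.
  - assert (2 * x * (1 - x) * F1 al x / (al * F0 al x) < 2 * x); [|lra].
    apply (Rmult_lt_reg_r (al * F0 al x)); [nra|].
    unfold Rdiv. rewrite Rmult_assoc, Rinv_l, Rmult_1_r by nra. nra.
Qed.

Lemma mono a1 a2 h1 h2 : 1 / 2 < a1 -> a1 < a2 -> a2 < 1 ->
  is_solution a1 h1 -> is_solution a2 h2 -> forall th, Iop th -> h1 th < h2 th.
Proof.
  intros H1 H12 H2 Hs1 Hs2 th Hth.
  assert (Hb : forall t, Iop t -> 0 < h2 t < 1).
  { intros t Ht. rewrite (uniq a2 h2 (hsol a2)); try lra; auto.
    - unfold hsol. apply G_bounds; [lra|]. apply X_range; auto.
    - apply hsol_sol; lra.
    - unfold Iop, Icl in *; lra. }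
  pose proof Hs2 as [hd2 [[Hc2 Hd2] [Ho2 H02]]].
  pose proof Hs1 as [hd1 [[Hc1 Hd1] [Ho1 H01]]].
  assert (Hsup : is_supersolution a1 h2).
  { exists hd2; split; [split; auto|split; [|lra]].
    intros t Ht. rewrite Ho2 by auto. specialize (Hb t Ht).
    assert (0 < sin t) by (apply sin_gt_0; unfold Iop in Ht; pose proof PI_RGT_0; lra).
    unfold F. assert (0 <= (a2 - a1) * (1 - h2 t ^ 2) / sin t).
    { apply Rdiv_le_0_compat; [|lra]. apply Rmult_le_pos; nra. }
    assert (- (1 / sin t) * (a2 * h2 t ^ 2 - cos t * h2 t + 1 - a2) - - (1 / sin t) * (a1 * h2 t ^ 2 - cos t * h2 t + 1 - a1) = (a2 - a1) * (1 - h2 t ^ 2) / sin t) by (field; lra).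
    lra. }
  assert (Hle : h1 th <= h2 th).
  { apply (comparison a1 h1 h2); auto; [lra|unfold Iop, Icl in *; lra]. }
  destruct Hle as [|Heq]; auto. exfalso.
  assert (Hst : 0 < sin th) by (apply sin_gt_0; unfold Iop in Hth; pose proof PI_RGT_0; lra).
  specialize (Hb th Hth).
  set (l := (a2 - a1) * (1 - h2 th ^ 2) / sin th).
  assert (Hl : 0 < l) by (apply Rdiv_lt_0_compat; [apply Rmult_lt_0_compat; nra|lra]).
  assert (Hdl : hd2 th - hd1 th = l).
  { rewrite Ho2, Ho1, Heq by auto. unfold l, F. field. lra. }
  destruct (proj1 (Hd2 th Hth) (l / 4) ltac:(lra)) as [e2 [He2 He2']].
  destruct (proj1 (Hd1 th Hth) (l / 4) ltac:(lra)) as [e1 [He1 He1']].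
  set (y := th - Rmin (Rmin e1 e2) th / 2).
  assert (Hm : 0 < Rmin (Rmin e1 e2) th) by (repeat apply Rmin_pos; unfold Iop in Hth; lra).
  pose proof (Rmin_l (Rmin e1 e2) th). pose proof (Rmin_r (Rmin e1 e2) th).
  pose proof (Rmin_l e1 e2). pose proof (Rmin_r e1 e2).
  assert (HyI : Icl y) by (unfold Icl, Iop in *; unfold y; lra).
  assert (Hyt : y < th) by (unfold y; lra). assert (Hyn : y <> th) by lra.
  assert (Hya : Rabs (y - th) = Rmin (Rmin e1 e2) th / 2) by (unfold y; rewrite Rabs_left; lra).
  specialize (He2' y HyI Hyn ltac:(lra)). specialize (He1' y HyI Hyn ltac:(lra)).
  assert (Hge : 0 <= h2 y - h1 y) by (pose proof (comparison a1 h1 h2 ltac:(lra) Hs1 Hsup y HyI); lra).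
  assert (Hq : (h2 y - h2 th) / (y - th) - (h1 y - h1 th) / (y - th) <= 0).
  { replace ((h2 y - h2 th) / (y - th) - (h1 y - h1 th) / (y - th)) with ((h2 y - h1 y) / (y - th)) by (rewrite Heq; field; lra).
    replace ((h2 y - h1 y) / (y - th)) with (- ((h2 y - h1 y) / (th - y))) by (field; lra).
    assert (0 <= (h2 y - h1 y) / (th - y)) by (apply Rdiv_le_0_compat; lra). lra. }
  revert He2' He1'. unfold Rabs. repeat destruct Rcase_abs; lra.
Qed.

Definition fJ x := / (x * (1 - x) * F0 (1 / 2) x ^ 2).
Definition J x := RInt fJ x (1 / 2).
Definition Cc c := 17 + exp c.
Definition Gc c x := G (1 / 2) x - 4 / (F0 (1 / 2) x ^ 2 * (Cc c + J x)).
Definition Hc c th := if Rle_dec th 0 then 1 else Gc c (X th).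

Lemma hal : 0 < 1 / 2 <= 1.
Proof. lra. Qed.

Lemma fJ_deriv x : 0 < x < 1 -> ex_derive fJ x.
Proof.
  intros Hx. assert (Hx' : Rabs x < 1) by (rewrite Rabs_pos_eq; lra).
  pose proof (dF0 _ hal x Hx') as H0. pose proof (F0_ge1 _ hal x ltac:(lra)).
  unfold fJ. auto_derive. repeat split.
  - eexists; exact H0.
  - assert (0 < x * (1 - x) * (F0 (1/2) x * (F0 (1/2) x * 1))); [|lra].
    repeat apply Rmult_lt_0_compat; lra.
Qed.

Lemma fJ_cont x : 0 < x < 1 -> continuous fJ x.
Proof. intros H; exact (ex_derive_continuous fJ x (fJ_deriv x H)). Qed.

Lemma fJ_exRInt a b : 0 < a < 1 -> 0 < b < 1 -> ex_RInt fJ a b.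
Proof.
  intros Ha Hb. apply (ex_RInt_continuous (V:=R_CompleteNormedModule)). intros z Hz. apply fJ_cont.
  pose proof (Rmin_l a b). pose proof (Rmin_r a b). pose proof (Rmax_l a b). pose proof (Rmax_r a b).
  destruct (Rle_dec a b); [rewrite Rmin_left, Rmax_right in Hz by lra|rewrite Rmin_right, Rmax_left in Hz by lra]; lra.
Qed.

Lemma J_deriv x : 0 < x < 1 -> is_derive J x (- fJ x).
Proof.
  intros Hx.
  assert (Hp : 0 < Rmin x (1 - x)) by (apply Rmin_pos; lra).
  set (K := fun y => RInt fJ (1 / 2) y).
  assert (HK : is_derive K x (fJ x)).
  { apply (is_derive_RInt fJ K (1 / 2) x); [|apply fJ_cont; auto].
    exists (mkposreal _ Hp). intros y Hy. change (Rabs (y - x) < Rmin x (1 - x)) in Hy.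
    pose proof (Rmin_l x (1 - x)). pose proof (Rmin_r x (1 - x)).
    apply (RInt_correct (V:=R_CompleteNormedModule)), fJ_exRInt; [lra|]. unfold Rabs in Hy; destruct Rcase_abs in Hy; lra. }
  apply (is_derive_ext_loc (fun y => - K y)).
  - exists (mkposreal _ Hp). intros y Hy. change (Rabs (y - x) < Rmin x (1 - x)) in Hy.
    pose proof (Rmin_l x (1 - x)). pose proof (Rmin_r x (1 - x)).
    unfold J, K. symmetry. rewrite <- (opp_RInt_swap (V:=R_CompleteNormedModule)); [reflexivity|].
    apply fJ_exRInt; [lra|]. unfold Rabs in Hy; destruct Rcase_abs in Hy; lra.
  - exact (is_derive_opp K x _ HK).
Qed.

Lemma J_half : J (1 / 2) = 0.
Proof. unfold J. rewrite RInt_point. reflexivity. Qed.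

Lemma fJ_lb x : 0 < x <= 1 / 2 -> / (2 * x) <= fJ x.
Proof.
  intros Hx. unfold fJ.
  pose proof (F0_ge1 _ hal x ltac:(lra)). pose proof (F0_le _ hal x ltac:(lra)).
  apply Rinv_le_contravar.
  - apply Rmult_lt_0_compat; [apply Rmult_lt_0_compat; lra | apply pow_lt; lra].
  - assert (Hq : F0 (1/2) x * (1 - x) <= 1).
    { apply (Rmult_le_compat_r (1 - x)) in H0; [|lra].
      rewrite Rinv_l in H0 by lra. lra. }
    simpl. rewrite Rmult_1_r. nra.
Qed.

Lemma J_lb x : 0 < x <= 1 / 2 -> - ln (2 * x) / 2 <= J x.
Proof.
  intros Hx. destruct (Req_dec x (1 / 2)) as [->|Hne].
  - rewrite J_half. replace (2 * (1/2)) with 1 by field. rewrite ln_1. lra.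
  - set (psi := fun y => - J y - ln (2 * y) / 2).
    assert (Hd : forall y, 0 < y < 1 -> is_derive psi y (fJ y - / (2 * y))).
    { intros y Hy. unfold psi. pose proof (J_deriv y Hy) as HJ.
      auto_derive.
      - repeat split; [eexists; exact HJ|lra].
      - replace (Derive (fun x : R => J x) y) with (- fJ y) by (symmetry; apply is_derive_unique; exact HJ).
        field. lra. }
    assert (Hle : psi x <= psi (1 / 2)).
    { apply (incr_lemma psi (fun y => fJ y - / (2 * y))); [lra| | |].
      - intros y Hy. apply Hd. lra.
      - intros y Hy. pose proof (fJ_lb y ltac:(lra)). lra.
      - intros y Hy. apply derivable_continuous_pt. exists (fJ y - / (2 * y)).
        apply is_derive_Reals, Hd. lra. }
    unfold psi in Hle. rewrite J_half in Hle. replace (2 * (1/2)) with 1 in Hle by field.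
    rewrite ln_1 in Hle. lra.
Qed.

Lemma J_nonneg x : 0 < x <= 1 / 2 -> 0 <= J x.
Proof.
  intros Hx. pose proof (J_lb x Hx).
  assert (ln (2 * x) <= 0).
  { destruct (Req_dec x (1/2)) as [->|]; [replace (2 * (1/2)) with 1 by field; rewrite ln_1; lra|].
    rewrite <- ln_1. left. apply ln_increasing; lra. }
  lra.
Qed.

Definition dGc c x := dG (1 / 2) x + 4 * (2 * F0 (1/2) x * F1 (1/2) x * (Cc c + J x) - F0 (1/2) x ^ 2 * fJ x) / (F0 (1/2) x ^ 2 * (Cc c + J x)) ^ 2.

Lemma Cc_pos c : 17 < Cc c.
Proof. unfold Cc. pose proof (exp_pos c). lra. Qed.

Lemma Gc_deriv c x : 0 < x <= 1 / 2 -> is_derive (Gc c) x (dGc c x).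
Proof.
  intros Hx. assert (Hx' : Rabs x < 1) by (rewrite Rabs_pos_eq; lra).
  pose proof (dF0 _ hal x Hx') as H0. pose proof (F0_ge1 _ hal x ltac:(lra)).
  pose proof (G_deriv _ x hal ltac:(lra)) as HG. pose proof (J_deriv x ltac:(lra)) as HJ.
  pose proof (J_nonneg x Hx). pose proof (Cc_pos c).
  unfold Gc. auto_derive.
  - repeat split; try (eexists; eassumption).
    assert (0 < F0 (1/2) x * (F0 (1/2) x * 1) * (Cc c + J x)) by (apply Rmult_lt_0_compat; nra). lra.
  - replace (Derive (fun x0 : R => G (1/2) x0) x) with (dG (1/2) x) by (symmetry; apply is_derive_unique; exact HG).
    replace (Derive (fun x0 : R => F0 (1/2) x0) x) with (F1 (1/2) x) by (symmetry; apply is_derive_unique; exact H0).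
    replace (Derive (fun x0 : R => J x0) x) with (- fJ x) by (symmetry; apply is_derive_unique; exact HJ).
    match goal with |- ?a = ?b => change (@eq R a b) end.
    unfold dGc. field. lra.
Qed.

Lemma Gc_ric c x : 0 < x <= 1 / 2 ->
  2 * x * (1 - x) * dGc c x = - (1 / 2 * Gc c x ^ 2 - (1 - 2 * x) * Gc c x + 1 - 1 / 2).
Proof.
  intros Hx. pose proof (G_ric _ x hal ltac:(lra)) as Hr.
  pose proof (F0_ge1 _ hal x ltac:(lra)). pose proof (J_nonneg x Hx). pose proof (Cc_pos c).
  unfold dGc.
  replace (2 * x * (1 - x) * (dG (1 / 2) x + 4 * (2 * F0 (1 / 2) x * F1 (1 / 2) x * (Cc c + J x) - F0 (1 / 2) x ^ 2 * fJ x) / (F0 (1 / 2) x ^ 2 * (Cc c + J x)) ^ 2))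
    with (2 * x * (1 - x) * dG (1 / 2) x + 2 * x * (1 - x) * (4 * (2 * F0 (1 / 2) x * F1 (1 / 2) x * (Cc c + J x) - F0 (1 / 2) x ^ 2 * fJ x) / (F0 (1 / 2) x ^ 2 * (Cc c + J x)) ^ 2)) by ring.
  rewrite Hr. unfold Gc, G, fJ. field. repeat split; lra.
Qed.

Lemma Gc_pos c x : 0 < x <= 1 / 2 -> 0 < Gc c x.
Proof.
  intros Hx. pose proof (F0_ge1 _ hal x ltac:(lra)) as HF0. pose proof (J_nonneg x Hx). pose proof (Cc_pos c).
  pose proof (F1_ge _ hal x ltac:(lra)) as HF1.
  replace (ca (1/2) 1) with (1 / 4) in HF1 by (simpl; field).
  set (f0 := F0 (1/2) x) in *. set (f1 := F1 (1/2) x) in *. set (j := J x) in *. set (C := Cc c) in *.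
  assert (Hg : 1 / 4 <= G (1/2) x * f0 ^ 2).
  { unfold G. fold f0 f1. replace ((1 - 2 * x + 2 * x * (1 - x) * f1 / (1 / 2 * f0)) * f0 ^ 2)
      with ((1 - 2 * x) * f0 ^ 2 + 4 * x * (1 - x) * f1 * f0) by (field; lra).
    assert (1 <= f0 ^ 2) by nra.
    assert (x * (1 - x) * (1 / 4) <= x * (1 - x) * f1 * f0).
    { assert (0 <= x * (1 - x)) by nra. replace (x * (1 - x) * f1 * f0) with (x * (1 - x) * (f1 * f0)) by ring.
      apply Rmult_le_compat_l; [auto|nra]. }
    nra. }
  unfold Gc. fold f0 j C.
  assert (0 < f0 ^ 2 * (C + j)) by (apply Rmult_lt_0_compat; nra).
  apply (Rmult_lt_reg_r (f0 ^ 2 * (C + j))); auto. rewrite Rmult_0_l.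
  replace ((G (1 / 2) x - 4 / (f0 ^ 2 * (C + j))) * (f0 ^ 2 * (C + j))) with (G (1/2) x * f0 ^ 2 * (C + j) - 4) by (field; lra).
  nra.
Qed.

Lemma Hc_cont0 c : continue_in (Hc c) Icl 0.
Proof.
  intros eps Heps.
  destruct (hsol_cont (1/2) 0 hal ltac:(unfold Icl; pose proof PI_RGT_0; lra) (eps / 2) ltac:(lra)) as [d1 [Hd1 Hd1']].
  set (eta := exp (- (16 / eps)) / 2).
  assert (Heta : 0 < eta) by (unfold eta; pose proof (exp_pos (- (16 / eps))); lra).
  assert (HXc : continuity_pt X 0).
  { apply derivable_continuous_pt. exists (sin 0 / 2). apply is_derive_Reals, X_deriv. }
  destruct (HXc (Rmin eta (/ 2)) ltac:(apply Rmin_pos; lra)) as [d2 [Hd2 Hd2']].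
  exists (Rmin d1 d2). split; [apply Rmin_pos; lra|].
  intros t [[HtI Ht0] Htd]. simpl in *. unfold R_dist in *.
  pose proof (Rmin_l d1 d2). pose proof (Rmin_r d1 d2).
  unfold Hc. destruct (Rle_dec 0 0) as [_|]; [|lra].
  destruct (Rle_dec t 0) as [Hle|Hgt]; [unfold Icl in HtI; lra|].
  apply Rnot_le_lt in Hgt.
  assert (HtIop : 0 < t <= PI / 2) by (unfold Icl in HtI; lra).
  pose proof (X_range t HtIop) as HXr.
  specialize (Hd1' t). simpl in Hd1'. unfold R_dist in Hd1'.
  assert (Ht1 : Rabs (t - 0) < d1) by lra. specialize (Hd1' (conj (conj I Ht0) Ht1)). unfold hsol in Hd1'.
  rewrite X0, G_at0 in Hd1'.
  assert (Ht2 : Rabs (t - 0) < d2) by lra. specialize (Hd2' t (conj (conj I Ht0) Ht2)). rewrite X0 in Hd2'.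
  rewrite Rminus_0_r, Rabs_pos_eq in Hd2' by lra.
  pose proof (Rmin_l eta (/ 2)). 
  set (x := X t) in *.
  assert (Hxr : 0 < x <= 1 / 2) by lra.
  pose proof (J_lb x Hxr) as HJ.
  assert (HJbig : 8 / eps < J x).
  { assert (ln (2 * x) < - (16 / eps)).
    { rewrite <- (ln_exp (- (16 / eps))). apply ln_increasing; [lra|]. unfold eta in *. lra. }
    assert (8 / eps = (16 / eps) / 2) by (field; lra). lra. }
  pose proof (F0_ge1 _ hal x ltac:(lra)). pose proof (Cc_pos c).
  assert (Hw : 0 <= 4 / (F0 (1/2) x ^ 2 * (Cc c + J x)) < eps / 2).
  { assert (H8 : 0 < 8 / eps) by (apply Rdiv_lt_0_compat; lra).
    split; [left; apply Rdiv_lt_0_compat; [lra|apply Rmult_lt_0_compat; nra]|].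
    apply Rle_lt_trans with (4 / J x).
    - apply Rmult_le_compat_l; [lra|]. apply Rinv_le_contravar; [lra|]. assert (1 <= F0 (1/2) x ^ 2) by (simpl; nra). nra.
    - apply (Rmult_lt_reg_r (J x)); [lra|]. unfold Rdiv. rewrite Rmult_assoc, Rinv_l, Rmult_1_r by lra.
      apply (Rmult_lt_reg_l (/ eps)); [apply Rinv_0_lt_compat; lra|].
      replace (/ eps * 4) with (8 / eps * / 2) by (field; lra).
      replace (/ eps * (eps * / 2 * J x)) with (J x * / 2) by (field; lra). lra. }
  unfold Gc. fold x.
  revert Hd1'. unfold Rabs. repeat destruct Rcase_abs; lra.
Qed.

Lemma Hc_sol c : is_solution (1 / 2) (Hc c).
Proof.
  apply mk_solution.
  - intros th Hth. destruct (Req_dec th 0) as [->|Hne]; [apply Hc_cont0|].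
    assert (Hth' : 0 < th <= PI / 2) by (unfold Icl in Hth; lra).
    apply cont_of_cpt, derivable_continuous_pt.
    exists (F (1/2) th (Gc c (X th))).
    apply is_derive_Reals. eapply (is_derive_ext_loc (fun t => Gc c (X t))).
    + exists (mkposreal _ (proj1 Hth')). intros y Hy. change (Rabs (y - th) < th) in Hy.
      unfold Hc. destruct (Rle_dec y 0); [|reflexivity]. unfold Rabs in Hy; destruct Rcase_abs in Hy; lra.
    + apply is_derive_Reals. pose proof (X_range th Hth').
      apply (theta_sol (1/2) (Gc c) (dGc c)); auto.
      * apply Gc_deriv; lra.
      * apply Gc_ric; lra.
  - intros th Hth.
    assert (Hth' : 0 < th <= PI / 2) by (unfold Iop in Hth; lra).
    replace (Hc c th) with (Gc c (X th)) by (unfold Hc; destruct (Rle_dec th 0); [lra|reflexivity]).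
    apply is_derive_Reals. eapply (is_derive_ext_loc (fun t => Gc c (X t))).
    + exists (mkposreal _ (proj1 Hth')). intros y Hy. change (Rabs (y - th) < th) in Hy.
      unfold Hc. destruct (Rle_dec y 0); [|reflexivity]. unfold Rabs in Hy; destruct Rcase_abs in Hy; lra.
    + apply is_derive_Reals. pose proof (X_range th Hth').
      apply (theta_sol (1/2) (Gc c) (dGc c)); auto.
      * apply Gc_deriv; lra.
      * apply Gc_ric; lra.
  - unfold Hc. destruct (Rle_dec 0 0); [reflexivity|lra].
Qed.

Lemma Hc_pos c th : Icl th -> Hc c th > 0.
Proof.
  intros Hth. unfold Hc. destruct (Rle_dec th 0); [lra|].
  apply Gc_pos. pose proof (X_range th ltac:(unfold Icl in Hth; lra)). lra.
Qed.

Lemma Hc_inj c1 c2 : c1 <> c2 -> Hc c1 (PI / 2) <> Hc c2 (PI / 2).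
Proof.
  intros Hne. pose proof PI_RGT_0.
  unfold Hc. destruct (Rle_dec (PI / 2) 0); [lra|].
  assert (HX : X (PI / 2) = 1 / 2) by (unfold X; rewrite cos_PI2; field).
  rewrite HX. unfold Gc. rewrite J_half, !Rplus_0_r.
  pose proof (F0_ge1 _ hal (1/2) ltac:(lra)). pose proof (Cc_pos c1). pose proof (Cc_pos c2).
  intros Heq.
  assert (Heq2 : 4 / (F0 (1 / 2) (1 / 2) ^ 2 * Cc c1) = 4 / (F0 (1 / 2) (1 / 2) ^ 2 * Cc c2)) by lra.
  assert (HF : 0 < F0 (1/2) (1/2) ^ 2) by (simpl; nra).
  set (A := F0 (1 / 2) (1 / 2) ^ 2) in *.
  assert (E : 4 / (A * Cc c1) * (A * Cc c1) * (A * Cc c2) = 4 / (A * Cc c2) * (A * Cc c1) * (A * Cc c2)) by (rewrite Heq2; ring).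
  replace (4 / (A * Cc c1) * (A * Cc c1) * (A * Cc c2)) with (4 * (A * Cc c2)) in E by (field; lra).
  replace (4 / (A * Cc c2) * (A * Cc c1) * (A * Cc c2)) with (4 * (A * Cc c1)) in E by (field; lra).
  assert (E2 : Cc c1 = Cc c2) by nra.
  unfold Cc in E2. apply Hne, exp_inv. lra.
Qed.

Theorem lemma3 :
  (* (i) existence and uniqueness for alpha in (1/2,1) *)
  (forall alpha : R, 1/2 < alpha < 1 ->
     exists h : R -> R, is_solution alpha h /\
       forall g : R -> R, is_solution alpha g -> forall th, Icl th -> g th = h th) /\
  (* (i) strict monotonicity in alpha *)
  (forall (a1 a2 : R) (h1 h2 : R -> R), 1/2 < a1 -> a1 < a2 -> a2 < 1 ->
     is_solution a1 h1 -> is_solution a2 h2 ->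
     forall th, Iop th -> h1 th < h2 th) /\
  (* (ii) a continuum of distinct positive solutions for alpha = 1/2 *)
  (exists H : R -> R -> R,
     (forall c : R, is_solution (1/2) (H c) /\ forall th, Icl th -> H c th > 0) /\
     (forall c1 c2 : R, c1 <> c2 -> exists th, Icl th /\ H c1 th <> H c2 th)) /\
  (* (iii) comparison with supersolutions *)
  (forall (alpha : R) (h hb : R -> R), 1/2 < alpha < 1 ->
     is_solution alpha h -> is_supersolution alpha hb ->
     forall th, Icl th -> h th <= hb th).

Proof.
  split; [|split; [|split]].
  - intros al Hal. exists (hsol al). split; [apply hsol_sol; lra|].
    intros g Hg th Hth. apply (uniq al); auto. apply hsol_sol; lra.
  - intros a1 a2 h1 h2 H1 H2 H3 Hs1 Hs2. eapply mono; eauto.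
  - exists Hc. split.
    + intros c. split; [apply Hc_sol|intros th Hth; apply Hc_pos; auto].
    + intros c1 c2 Hne. exists (PI / 2). split; [unfold Icl; pose proof PI_RGT_0; lra|apply Hc_inj; auto].
  - intros al h hb Hal Hh Hhb. eapply comparison; eauto.
Qed.
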